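(* Let $N(I,O,r)$ be a negator and $T(B,C)$ a proper $(2,3)$-pole. Form the $(2,3)$-pole $M=\operatorname{NT}(N,T)$ as follows: perform the junction of $O$ and $B$; choose one semiedge of $C$, whose dangling edge is $e$, subdivide $e$ with a new vertex $v$ (so that $v$ lies on $e$ and the free end of $e$ remains a semiedge, now of a dangling edge at $v$), and attach the residual semiedge $r$ of $N$ to $v$. The connectors of $M$ are $I=\{i_1,i_2\}$ and $C'=\{e_1,e_2,e_3\}$, where $e_1,e_2$ are the two other semiedges of $C$ and $e_3$ is the free end of the subdivided edge $e$. Then every colouring $\varphi$ of $M$ satisfies $\varphi(i_1)=\varphi(i_2)$ and $\varphi(e_1)+\varphi(e_2)+\varphi(e_3)=0$. Moreover, if $N$ is a perfect negator and $T$ is perfect, then for all $x,a,b,c\in\mathbb{K}$ with $a+b+c=0$ there is a colouring $\varphi$ of $M$ with $(\varphi(i_1),\varphi(i_2),\varphi(e_1),\varphi(e_2),\varphi(e_3))=(x,x,a,b,c)$.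
   Context: A multipole consists of vertices and edges; each edge has two ends, each either incident with a vertex or free; a free end is a semiedge. All multipoles are cubic (every vertex incident with exactly three edge ends; loops and parallel edges allowed). Semiedges are partitioned into connectors; a $(c_1,\dots,c_n)$-pole has connectors of sizes $c_1,\dots,c_n$. The junction of two semiedges identifies the two free ends into a single edge (attaching a semiedge to a vertex means making that vertex the end of it); the junction of two connectors performs junctions along an arbitrary bijection. Let $\mathbb{K}=\{(0,1),(1,0),(1,1)\}\subset\mathbb{Z}_2\times\mathbb{Z}_2$. A colouring of a multipole assigns elements of $\mathbb{K}$ to edges so that at every vertex the three incident edge ends get distinct colours. Flow through a connector $S$: $\varphi_*(S)=\sum_{e\in S}\varphi(e)$. A snark is a connected cubic graph with no colouring. Negator: for a snark $G$ and a path $uwv$ in $G$, $\operatorname{Neg}(G;u,v)$ is the $(2,2,1)$-pole $N(I,O,r)$ obtained by deleting $u,w,v$, with $I$ the two semiedges formerly at $u$, $O$ the two semiedges formerly at $v$, $r$ the semiedge formerly at $w$. A negator $N(\{i_1,i_2\},\{o_1,o_2\},r)$ is perfect if its set of tuples $(\varphi(i_1),\varphi(i_2),\varphi(o_1),\varphi(o_2),\varphi(r))$ over colourings equals $\{(x,x,a,b,a+b),(a,b,x,x,a+b): x,a,b\in\mathbb{K}, a\ne b\}$. A $(2,3)$-pole $T(B,C)$ is proper if $\varphi_*(B)\ne0$ and $\varphi_*(C)\ne0$ for every colouring; it is perfect (as a proper $(2,3)$-pole) if its colouring set on $(B,C)$ equals $\{(x_1,x_2,y_1,y_2,y_3)\in\mathbb{K}^5: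 x_1+x_2=y_1+y_2+y_3\ne0\}$. *)

(* Defs.v *)
From mathcomp Require Import all_boot all_algebra.
Unset Strict Implicit. Unset Printing Implicit Defensive.
Import GRing.Theory.
Local Open Scope ring_scope.

Definition colr := ('Z_2 * 'Z_2)%type.
Definition inK (c : colr) : bool := c != 0.

(** A (raw) multipole, in dart (edge-end) form.
    - [mD] : the edge ends ("darts"); [mmate] pairs the two ends of an edge;
    - [mvtx d] : the vertex the end [d] is incident with, or [None] if free;
    - [mglue] : identification of free ends produced by junctions: a junction of
      two semiedges f, g identifies their free ends into a single edge; we record
      this by [mglue f = g], [mglue g = f] ([mglue] is the identity elsewhere).
    An edge is thus a chain of darts linked alternately by [mmate] and [mglue];
    a semiedge is a free end that is not glued. *)
Record mpole := MPole {
  mV : finType;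
  mD : finType;
  mvtx : mD -> option mV;
  mmate : mD -> mD;
  mglue : mD -> mD }.

Definition is_multipole (M : mpole) : Prop :=
  involutive (mmate M) /\ (forall d, mmate M d != d) /\
  involutive (mglue M) /\ (forall d, mglue M d != d -> mvtx M d = None) /\
  (forall x : mV M, #|[set d | mvtx M d == Some x]| = 3).

Definition semiedge (M : mpole) (d : mD M) : bool :=
  (mvtx M d == None) && (mglue M d == d).

Definition colouring (M : mpole) (phi : mD M -> colr) : Prop :=
  (forall d, inK (phi d)) /\
  (forall d, phi (mmate M d) = phi d) /\
  (forall d, phi (mglue M d) = phi d) /\
  (forall d1 d2, d1 != d2 -> mvtx M d1 != None -> mvtx M d1 = mvtx M d2 ->
     phi d1 != phi d2).

Definition pole221 (M : mpole) (i1 i2 o1 o2 r : mD M) : Prop :=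
  uniq [:: i1; i2; o1; o2; r] /\ all (semiedge M) [:: i1; i2; o1; o2; r] /\
  (forall d, semiedge M d -> d \in [:: i1; i2; o1; o2; r]).

Definition pole23 (M : mpole) (b1 b2 c1 c2 c3 : mD M) : Prop :=
  uniq [:: b1; b2; c1; c2; c3] /\ all (semiedge M) [:: b1; b2; c1; c2; c3] /\
  (forall d, semiedge M d -> d \in [:: b1; b2; c1; c2; c3]).

Definition adj (M : mpole) : rel (mV M) :=
  fun x y => [exists d, (mvtx M d == Some x) && (mvtx M (mmate M d) == Some y)].

Definition snark (G : mpole) : Prop :=
  is_multipole G /\ (forall d, mvtx G d != None) /\
  (forall x y : mV G, connect (adj G) x y) /\
  ~ (exists phi, colouring G phi).

(** Negator construction Neg(G;u,v) for a path u w v: delete u, w, v together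
    with the edges joining two of them; edges from them to the rest become
    dangling edges (the dart formerly at the deleted vertex becomes free). *)
Section Neg.
Variables (G : mpole) (u w v : mV G).
Definition delS (o : option (mV G)) : bool :=
  if o is Some x then x \in [:: u; w; v] else false.
Definition NegV := {x : mV G | x \notin [:: u; w; v]}.
Definition NegD := {d : mD G | ~~ (delS (mvtx G d) && delS (mvtx G (mmate G d)))}.
Definition Neg_vtx (d : NegD) : option NegV :=
  if mvtx G (val d) is Some x then insub x else None.
Definition Neg_mate (d : NegD) : NegD := insubd d (mmate G (val d)).
Definition Neg : mpole := @MPole NegV NegD Neg_vtx Neg_mate id.
Definition Neg_I : {set NegD} := [set d | mvtx G (val d) == Some u].
Definition Neg_r : {set NegD} := [set d | mvtx G (val d) == Some w].
Definition Neg_O : {set NegD} := [set d | mvtx G (val d) == Some v].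
End Neg.

Definition mp_iso (A B : mpole) (fV : mV A -> mV B) (fD : mD A -> mD B) : Prop :=
  bijective fV /\ bijective fD /\
  (forall d, mvtx B (fD d) = omap fV (mvtx A d)) /\
  (forall d, mmate B (fD d) = fD (mmate A d)) /\
  (forall d, mglue B (fD d) = fD (mglue A d)).

Definition is_negator (N : mpole) (i1 i2 o1 o2 r : mD N) : Prop :=
  exists (G : mpole) (u w v : mV G),
    snark G /\ uniq [:: u; w; v] /\ adj G u w /\ adj G w v /\
    exists (fV : mV N -> NegV G u w v) (fD : mD N -> NegD G u w v),
      mp_iso N (Neg G u w v) fV fD /\
      [set fD i1; fD i2] = Neg_I G u w v /\
      [set fD o1; fD o2] = Neg_O G u w v /\
      [set fD r] = Neg_r G u w v.

Definition perfect_negator (N : mpole) (i1 i2 o1 o2 r : mD N) : Prop :=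
  is_negator N i1 i2 o1 o2 r /\
  forall t1 t2 t3 t4 t5 : colr,
    (exists phi, colouring N phi /\
       [/\ phi i1 = t1, phi i2 = t2, phi o1 = t3, phi o2 = t4 & phi r = t5])
    <->
    ((exists x a b, [/\ inK x, inK a, inK b, a != b &
        (t1, t2, t3, t4, t5) = (x, x, a, b, a + b)]) \/
     (exists x a b, [/\ inK x, inK a, inK b, a != b &
        (t1, t2, t3, t4, t5) = (a, b, x, x, a + b)])).

Definition proper23 (T : mpole) (b1 b2 c1 c2 c3 : mD T) : Prop :=
  forall phi, colouring T phi ->
    phi b1 + phi b2 != 0 /\ phi c1 + phi c2 + phi c3 != 0.

Definition perfect23 (T : mpole) (b1 b2 c1 c2 c3 : mD T) : Prop :=
  proper23 T b1 b2 c1 c2 c3 /\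
  forall x1 x2 y1 y2 y3 : colr,
    (exists phi, colouring T phi /\
       [/\ phi b1 = x1, phi b2 = x2, phi c1 = y1, phi c2 = y2 & phi c3 = y3])
    <->
    ([/\ inK x1, inK x2, inK y1, inK y2 & inK y3] /\
     x1 + x2 = y1 + y2 + y3 /\ x1 + x2 != 0).

(** New darts: [inr false] (end at v of the new dangling edge) and
    [inr true] (its free end e3). *)
Section NT.
Variables (N T : mpole) (i1 i2 o1 o2 r : mD N) (b1 b2 c1 c2 c3 : mD T).
Definition NT_V := (mV N + mV T + unit)%type.
Definition NT_D := (mD N + mD T + bool)%type.
Definition NT_vtx (d : NT_D) : option NT_V :=
  match d with
  | inl (inl d) => if d == r then Some (inr tt) else omap (fun x => inl (inl x)) (mvtx N d)
  | inl (inr d) => if d == c3 then Some (inr tt) else omap (fun x => inl (inr x)) (mvtx T d)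
  | inr false => Some (inr tt)
  | inr true => None
  end.
Definition NT_mate (d : NT_D) : NT_D :=
  match d with
  | inl (inl d) => inl (inl (mmate N d))
  | inl (inr d) => inl (inr (mmate T d))
  | inr b => inr (~~ b)
  end.
Definition NT_glue (d : NT_D) : NT_D :=
  match d with
  | inl (inl d) => if d == o1 then inl (inr b1) else if d == o2 then inl (inr b2)
                   else inl (inl (mglue N d))
  | inl (inr d) => if d == b1 then inl (inl o1) else if d == b2 then inl (inl o2)
                   else inl (inr (mglue T d))
  | inr b => inr b
  end.
Definition NT : mpole := @MPole NT_V NT_D NT_vtx NT_mate NT_glue.
End NT.

(* Main.v *)
Require Import Defs.
From mathcomp Require Import all_boot all_algebra.
Import GRing.Theory.
Local Open Scope ring_scope.

Ltac cc x := let a := fresh in let b := fresh in case: x => a b; case: a => [[|[|?]] ?]; case: b => [[|[|?]] ?] => //.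

Lemma addxx (a : colr) : a + a = 0.
Proof. apply/eqP; cc a. Qed.

Lemma ch2 (a b : colr) : a + b = 0 -> a = b.
Proof. by move=> H; rewrite -[a]addr0 -(addxx b) addrA H add0r. Qed.

Lemma add_eq0 (a b : colr) : (a + b == 0) = (a == b).
Proof. by apply/eqP/eqP => [/ch2|->]; rewrite ?addxx. Qed.

Lemma sum3_b (a b c : colr) : inK a ==> inK b ==> inK c ==> (a != b) ==> (a != c) ==> (b != c) ==> (a + b + c == 0).
Proof. cc a; cc b; cc c. Qed.

Lemma sum3 (a b c : colr) : inK a -> inK b -> inK c -> a != b -> a != c -> b != c -> a + b + c = 0.
Proof. move=> Ha Hb Hc ab ac bc; apply/eqP; move: (sum3_b a b c); by rewrite Ha Hb Hc ab ac bc. Qed.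

Lemma fact2_b (a b : colr) : [&& inK b ==> (a + b != a), inK a ==> (a + b != b) & (inK a && inK b && (a != b)) ==> inK (a+b)].
Proof. cc a; cc b. Qed.

Lemma addK_neq (a b : colr) : inK b -> a + b != a.
Proof. by move=> H; case/and3P: (fact2_b a b); rewrite H. Qed.
Lemma addK_neq' (a b : colr) : inK a -> a + b != b.
Proof. by move=> H; case/and3P: (fact2_b a b); rewrite H. Qed.
Lemma add_inK (a b : colr) : inK a -> inK b -> a != b -> inK (a + b).
Proof. by move=> Ha Hb ab; case/and3P: (fact2_b a b); rewrite Ha Hb ab. Qed.

Definition pickK (c : colr) : colr := if c == (1, 0) then (0, 1) else (1, 0).
Lemma pickK_b (c : colr) : inK (pickK c) && (pickK c != c).
Proof. rewrite /pickK; cc c. Qed.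

Lemma inv_sum0 (T : finType) (A : pred T) (f : T -> T) (phi : T -> colr) :
  involutive f -> (forall d, A d -> f d != d) -> (forall d, A d -> A (f d)) ->
  (forall d, phi (f d) = phi d) -> \sum_(d | A d) phi d = 0.
Proof.
move=> fi nf cl pf.
pose P := fun d => (nat_of_ord (enum_rank d) < enum_rank (f d))%N.
rewrite (bigID P) /=.
have -> : \sum_(d | A d && ~~ P d) phi d = \sum_(d | A d && P d) phi d.
  rewrite (reindex_inj (inv_inj fi)) /=. apply: eq_big => [d|d _]; last exact: pf.
  have Ae : A (f d) = A d by apply/idP/idP => [/cl|/cl]; rewrite ?fi.
  rewrite Ae; case Ad: (A d) => //=.
  rewrite /P fi -leqNgt leq_eqVlt.
  have : enum_rank d != enum_rank (f d) by rewrite (inj_eq enum_rank_inj) eq_sym nf.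
  move/negPf; rewrite -(inj_eq val_inj) /= => ->. by [].
by rewrite addxx.
Qed.

Lemma three (T : finType) (A : pred T) (a b c d : T) : #|A| = 3 -> uniq [:: a; b; c] ->
  a \in A -> b \in A -> c \in A -> d \in A -> d \in [:: a; b; c].
Proof.
move=> cA uq Ha Hb Hc Hd; apply/contraT => nd.
have u4 : uniq [:: d; a; b; c] by rewrite /= nd.
have : (#|[:: d; a; b; c]| <= #|A|)%N by apply: subset_leq_card; apply/subsetP => z; rewrite !inE => /or4P [] /eqP ->.
by rewrite cA (card_uniqP u4).
Qed.

Lemma pick3 (T : eqType) (f : T -> colr) a b c d1 d2 : d1 \in [:: a; b; c] -> d2 \in [:: a; b; c] ->
  d1 != d2 -> f a != f b -> f a != f c -> f b != f c -> f d1 != f d2.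
Proof.
move=> H1 H2 ne ab ac bc; move: ne.
by move: H1 H2; rewrite !inE => /or3P [] /eqP -> /or3P [] /eqP ->; rewrite ?eqxx // => _; rewrite eq_sym.
Qed.

Lemma parity (M : mpole) phi : is_multipole M -> colouring M phi ->
  \sum_(d | semiedge M d) phi d = 0.
Proof.
case=> mi [mnf [gi [gv c3]]] [cK [cm [cg cv]]].
have tot : \sum_(d | xpredT d) phi d = 0.
  by apply: (@inv_sum0 _ _ (mmate M)) => // d _; apply: mnf.
rewrite (bigID (fun d => mvtx M d == None)) /= in tot.
have Hv : \sum_(d | ~~ (mvtx M d == None)) phi d = 0.
  rewrite (partition_big (fun d => mvtx M d) (fun o => o != None)) /=; last by [].
  apply: big1 => -[x|] // _.
  rewrite (eq_bigl (mem [set d | mvtx M d == Some x])); last first.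
    by move=> d; rewrite !inE; case: (mvtx M d).
  have := c3 x; set S := [set d | mvtx M d == Some x] => cS.
  rewrite -big_enum.
  have : size (enum S) = 3 by rewrite -cardE.
  have uS := enum_uniq (mem S).
  have mS : forall z, z \in enum S -> mvtx M z = Some x.
    by move=> z; rewrite mem_enum inE => /eqP.
  case: (enum S) uS mS => [|a [|b [|c [|]]]] //= uS mS _.
  rewrite !big_cons big_nil addr0 addrA.
  move: uS; rewrite !inE /= andbT => /andP [/norP [ab ac] bc].
  have ma := mS a; have mb := mS b; have mc := mS c.
  rewrite !inE !eqxx ?orbT in ma mb mc.
  apply: sum3 => //; apply: cv => //; rewrite ?ma ?mb ?mc //.
rewrite Hv addr0 (bigID (fun d => mglue M d == d)) /= in tot.
have Hg : \sum_(d | (mvtx M d == None) && ~~ (mglue M d == d)) phi d = 0.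
  apply: (@inv_sum0 _ _ (mglue M)) => // d.
    by case/andP.
  case/andP => _ ne; rewrite gi [d == _]eq_sym ne andbT.
  by apply/eqP/gv; rewrite gi eq_sym.
by rewrite Hg addr0 in tot.
Qed.

Lemma list_sum (T : finType) (P : pred T) (s : seq T) (phi : T -> colr) :
  uniq s -> all P s -> (forall d, P d -> d \in s) ->
  \sum_(d | P d) phi d = \sum_(d <- s) phi d.
Proof.
move=> us aP Ps; rewrite big_uniq //; apply: eq_bigl => d.
apply/idP/idP => [/Ps //|]. by move/(allP aP).
Qed.

Lemma par221 N i1 i2 o1 o2 r phi : is_multipole N -> pole221 N i1 i2 o1 o2 r ->
  colouring N phi -> phi i1 + phi i2 + phi o1 + phi o2 + phi r = 0.
Proof.
move=> mN [u [a e]] cN; have := parity _ _ mN cN.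
by rewrite (list_sum _ _ _ phi u a e) !big_cons big_nil addr0 !addrA.
Qed.

Lemma par23 T b1 b2 c1 c2 c3 phi : is_multipole T -> pole23 T b1 b2 c1 c2 c3 ->
  colouring T phi -> phi b1 + phi b2 + phi c1 + phi c2 + phi c3 = 0.
Proof.
move=> mN [u [a e]] cN; have := parity _ _ mN cN.
by rewrite (list_sum _ _ _ phi u a e) !big_cons big_nil addr0 !addrA.
Qed.

Lemma tripleV (G : mpole) (Phi : mD G -> colr) x a b c : is_multipole G ->
  uniq [:: a; b; c] -> mvtx G a = Some x -> mvtx G b = Some x -> mvtx G c = Some x ->
  Phi a != Phi b -> Phi a != Phi c -> Phi b != Phi c ->
  forall d1 d2, d1 != d2 -> mvtx G d1 = Some x -> mvtx G d2 = Some x -> Phi d1 != Phi d2.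
Proof.
move=> [_ [_ [_ [_ c3]]]] uq ha hb hc ab ac bc d1 d2 ne h1 h2.
have th := @three _ (mem [set d | mvtx G d == Some x]) a b c _ (c3 x) uq.
apply: (pick3 _ Phi a b c d1 d2 (th d1 _ _ _ _) (th d2 _ _ _ _) ne) => //; by rewrite inE ?ha ?hb ?hc ?h1 ?h2.
Qed.

Lemma neg_key N i1 i2 o1 o2 r phi : pole221 N i1 i2 o1 o2 r -> is_multipole N ->
  is_negator N i1 i2 o1 o2 r -> colouring N phi -> phi i1 != phi i2 -> phi o1 != phi o2 -> False.
Proof.
move=> p221 mN [G [u [w [v [[mpG [allv [_ nocol]]] [uq [auw [awv [fV [fD [[[gV fVK gVK] [[gD fDK gDK] [isv [ism isg]]]] [eI [eO eR]]]]]]]]]]]]] cN a12 b12.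
have par := par221 _ _ _ _ _ _ _ mN p221 cN.
case: p221 => uqN _.
have i12 : i1 != i2 by apply/eqP => E; move: uqN; rewrite E /= !inE eqxx.
have o12 : o1 != o2 by apply/eqP => E; move: uqN; rewrite E /= !inE !eqxx ?orbT ?andbF.
have uw : u != w by apply/eqP => E; move: uq; rewrite E /= !inE !eqxx ?orbT ?andbF.
have uv : u != v by apply/eqP => E; move: uq; rewrite E /= !inE !eqxx ?orbT ?andbF.
have wv : w != v by apply/eqP => E; move: uq; rewrite E /= !inE !eqxx ?orbT ?andbF.
have SwSu : (Some w == Some u) = false by rewrite (inj_eq Some_inj) eq_sym (negbTE uw).
have SvSu : (Some v == Some u) = false by rewrite (inj_eq Some_inj) eq_sym (negbTE uv).
case: cN => cK [cm [cg cv]].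
case: (mpG) => mmG [mnf [_ [gv c3]]].
pose P := fun d : mD G => ~~ (delS G u w v (mvtx G d) && delS G u w v (mvtx G (mmate G d))).
pose A := phi i1 + phi i2. pose B := phi o1 + phi o2.
pose Phi := fun d : mD G => match (insub d : option (NegD G u w v)) with
  | Some y => phi (gD y)
  | None => if (mvtx G d == Some u) || (mvtx G (mmate G d) == Some u) then A else B end.
have PhiS : forall y : NegD G u w v, Phi (val y) = phi (gD y) by move=> y; rewrite /Phi valK.
have PhiN : forall d, ~~ P d -> Phi d = if (mvtx G d == Some u) || (mvtx G (mmate G d) == Some u) then A else B.
  by move=> d nP; rewrite /Phi insubN.
have exS : forall d, P d -> exists y : NegD G u w v, val y = d.
  by move=> d Pd; exists (exist _ d Pd).
have Pv : forall y : NegD G u w v, P (val y) := fun y => valP y.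
have Pm : forall d, P (mmate G d) = P d by move=> d; rewrite /P mmG andbC.
have nv : forall y, Neg_vtx G u w v y = omap fV (mvtx N (gD y)) by move=> y; rewrite -isv gDK.
have nm : forall y, gD (Neg_mate G u w v y) = mmate N (gD y).
  by move=> y; apply: (can_inj fDK); rewrite gDK -ism gDK.
have dU : delS G u w v (Some u) by rewrite /delS !inE eqxx.
have dW : delS G u w v (Some w) by rewrite /delS !inE eqxx ?orbT.
have dV : delS G u w v (Some v) by rewrite /delS !inE eqxx ?orbT.
rewrite /adj in auw awv.
case/existsP: auw => du /andP [/eqP duu /eqP duw].
case/existsP: awv => d' /andP [/eqP d'w /eqP d'v].
have nPdu : ~~ P du by rewrite /P duu duw dU dW.
have nPd' : ~~ P d' by rewrite /P d'w d'v dV dW.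
have Phidu : Phi du = A by rewrite PhiN // duu eqxx.
have Phimdu : Phi (mmate G du) = A by rewrite PhiN ?Pm // mmG duu eqxx orbT.
have Phid' : Phi d' = B by rewrite PhiN // d'w d'v SwSu SvSu.
have Phimd' : Phi (mmate G d') = B by rewrite PhiN ?Pm // mmG d'v d'w SwSu SvSu.
have PhiF : forall d, Phi (val (fD d)) = phi d by move=> d; rewrite PhiS fDK.
have inI : forall d, d \in [:: i1; i2] -> mvtx G (val (fD d)) = Some u.
  move=> d hd; have : fD d \in Neg_I G u w v by rewrite -eI !inE; move: hd; rewrite !inE => /orP [] /eqP ->; rewrite eqxx ?orbT.
  by rewrite inE => /eqP.
have inO : forall d, d \in [:: o1; o2] -> mvtx G (val (fD d)) = Some v.
  move=> d hd; have : fD d \in Neg_O G u w v by rewrite -eO !inE; move: hd; rewrite !inE => /orP [] /eqP ->; rewrite eqxx ?orbT.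
  by rewrite inE => /eqP.
have inR : mvtx G (val (fD r)) = Some w.
  have : fD r \in Neg_r G u w v by rewrite -eR !inE.
  by rewrite inE => /eqP.
have neqP : forall (y : NegD G u w v) d, ~~ P d -> val y != d.
  by move=> y d nPd; apply/negP => /eqP E; move: nPd; rewrite -E Pv.
have vfD : forall d e, d != e -> val (fD d) != val (fD e).
  by move=> d e; rewrite (inj_eq val_inj) (can_eq fDK).
have hA : inK A by apply: add_inK.
have hB : inK B by apply: add_inK.
move: par; rewrite -/A -(addrA A) -/B => par.
have AB : A != B.
  by apply/eqP => E; move: (cK r); rewrite E addxx add0r in par; rewrite par /inK eqxx.
have gAB : phi r = A + B by apply/esym/ch2.
apply: nocol; exists Phi; split; [|split; [|split]].
- move=> d; rewrite /Phi; case: insub => [y|]; first exact: cK.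
  by case: ifP.
- move=> d; have [Pd|nPd] := boolP (P d).
    have [y <-] := exS d Pd.
    have Pmy : P (mmate G (val y)) by rewrite Pm Pv.
    by rewrite -(insubdK y Pmy) -/(Neg_mate G u w v y) PhiS PhiS nm cm.
  by rewrite !PhiN ?Pm // mmG orbC.
- move=> d; have -> // : mglue G d = d.
  apply/eqP; apply/contraT => /gv H; by move: (allv d); rewrite H.
move=> d1 d2 ne; case E1: (mvtx G d1) => [x|] // _ E2.
have [xin|xout] := boolP (x \in [:: u; w; v]).
  move: xin; rewrite !inE => /or3P [] /eqP Ex; subst x.
  - apply: (tripleV _ Phi u (val (fD i1)) (val (fD i2)) du mpG) => //; rewrite ?inI ?inE ?eqxx ?orbT //.
    + by rewrite /= !inE negb_or vfD ?neqP.
    + by rewrite !PhiF.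
    + by rewrite PhiF Phidu eq_sym addK_neq.
    + by rewrite PhiF Phidu eq_sym addK_neq'.
  - apply: (tripleV _ Phi w (val (fD r)) (mmate G du) d' mpG) => //; rewrite ?inR ?mmG ?duw ?d'w //.
    + have mdd : mmate G du != d'.
        by apply/negP => /eqP E; move: uv; rewrite -(inj_eq Some_inj) -duu -d'v -E mmG eqxx.
      by rewrite /= !inE negb_or !neqP ?Pm ?mdd.
    + by rewrite PhiF Phimdu gAB addK_neq.
    + by rewrite PhiF Phid' gAB addK_neq'.
    + by rewrite Phimdu Phid'.
  - apply: (tripleV _ Phi v (val (fD o1)) (val (fD o2)) (mmate G d') mpG) => //; rewrite ?inO ?inE ?eqxx ?orbT ?mmG ?d'v //.
    + by rewrite /= !inE negb_or vfD ?neqP ?Pm.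
    + by rewrite !PhiF.
    + by rewrite PhiF Phimd' eq_sym addK_neq.
    + by rewrite PhiF Phimd' eq_sym addK_neq'.
have P1 : P d1 by rewrite /P /delS E1 (negbTE xout).
have P2 : P d2 by rewrite /P /delS -E2 (negbTE xout).
have [y1 Ey1] := exS d1 P1; have [y2 Ey2] := exS d2 P2.
move: ne; rewrite -Ey1 -Ey2 !PhiS => ne.
have hx : (insub x : option (NegV G u w v)) = Some (exist _ x xout) by exact: insubT.
have vy1 : Neg_vtx G u w v y1 = insub x by rewrite /Neg_vtx Ey1 E1.
have vy2 : Neg_vtx G u w v y2 = insub x by rewrite /Neg_vtx Ey2 -E2.
rewrite nv hx in vy1; rewrite nv hx in vy2.
apply: cv.
- by rewrite (can_eq gDK); apply: contra ne => /eqP ->.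
- by case: (mvtx N (gD y1)) vy1.
case: (mvtx N (gD y1)) vy1 => // a1 [] e1; case: (mvtx N (gD y2)) vy2 => // a2 [] e2.
by rewrite -(can_inj fVK (etrans e1 (esym e2))).
Qed.

Lemma NT_vtx_spec N T r c3 d z : NT_vtx N T r c3 d = Some z ->
  match z with
  | inl (inl x) => exists a, d = inl (inl a) /\ mvtx N a = Some x
  | inl (inr x) => exists a, d = inl (inr a) /\ mvtx T a = Some x
  | inr _ => d = inl (inl r) \/ d = inl (inr c3) \/ d = inr false end.
Proof.
case: d => [[a|a]|[]] //=.
- case: eqP => [-> [<-]|_]; first by left.
  case E: (mvtx N a) => [x|] //= [<-]; by exists a.
- case: eqP => [-> [<-]|_]; first by right; left.
  case E: (mvtx T a) => [x|] //= [<-]; by exists a.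
- by move=> [<-]; right; right.
Qed.

Theorem mainTheorem4 (N T : mpole) (i1 i2 o1 o2 r : mD N) (b1 b2 c1 c2 c3 : mD T) :
  is_multipole N -> is_multipole T ->
  pole221 N i1 i2 o1 o2 r -> pole23 T b1 b2 c1 c2 c3 ->
  is_negator N i1 i2 o1 o2 r -> proper23 T b1 b2 c1 c2 c3 ->
  let M := NT N T o1 o2 r b1 b2 c3 in
  (forall phi : mD M -> colr, colouring M phi ->
     phi (inl (inl i1)) = phi (inl (inl i2)) /\
     phi (inl (inr c1)) + phi (inl (inr c2)) + phi (inr true) = 0) /\
  (perfect_negator N i1 i2 o1 o2 r -> perfect23 T b1 b2 c1 c2 c3 ->
   forall x a b c : colr, inK x -> inK a -> inK b -> inK c -> a + b + c = 0 ->
     exists phi : mD M -> colr, colouring M phi /\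
       [/\ phi (inl (inl i1)) = x, phi (inl (inl i2)) = x,
           phi (inl (inr c1)) = a, phi (inl (inr c2)) = b & phi (inr true) = c]).
Proof.
move=> mN mT p221 p23 negN prT M.
case: (p221) => uqN [allN _]; move: allN; rewrite /= andbT => /and5P [si1 si2 so1 so2 sr].
case: (p23) => uqT [allT _]; move: allT; rewrite /= andbT => /and5P [sb1 sb2 sc1 sc2 sc3].
case/andP: sr => /eqP rN _; case/andP: so1 => _ /eqP go1; case/andP: so2 => _ /eqP go2.
case/andP: sc3 => /eqP c3N _; case/andP: sb1 => _ /eqP gb1; case/andP: sb2 => _ /eqP gb2.
have o12 : (o2 == o1) = false by apply/eqP => E; move: uqN; rewrite E /= !inE !eqxx ?orbT ?andbF.
have b12 : (b2 == b1) = false by apply/eqP => E; move: uqT; rewrite E /= !inE !eqxx ?orbT ?andbF.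
split.
  move=> phi [cK [cm [cg cv]]].
  have cN : colouring N (fun d => phi (inl (inl d))).
    split; [by move=> d; apply: cK|split; [by move=> d; apply: (cm (inl (inl d)))|split]].
    - move=> d; have [->//|ne] := eqVneq (mglue N d) d.
      have d1 : (d == o1) = false by apply/eqP => E; move: ne; rewrite E go1 eqxx.
      have d2 : (d == o2) = false by apply/eqP => E; move: ne; rewrite E go2 eqxx.
      by have := cg (inl (inl d)); rewrite /= d1 d2.
    - move=> d1 d2 ne nn e.
      have r1 : (d1 == r) = false by apply/eqP => E; move: nn; rewrite E rN eqxx.
      have r2 : (d2 == r) = false by apply/eqP => E; move: nn; rewrite e E rN eqxx.
      apply: (cv (inl (inl d1)) (inl (inl d2))) => /=; rewrite ?r1 ?r2 ?e //.
      by rewrite -e; case: (mvtx N d1) nn.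
  have cT : colouring T (fun d => phi (inl (inr d))).
    split; [by move=> d; apply: cK|split; [by move=> d; apply: (cm (inl (inr d)))|split]].
    - move=> d; have [->//|ne] := eqVneq (mglue T d) d.
      have d1 : (d == b1) = false by apply/eqP => E; move: ne; rewrite E gb1 eqxx.
      have d2 : (d == b2) = false by apply/eqP => E; move: ne; rewrite E gb2 eqxx.
      by have := cg (inl (inr d)); rewrite /= d1 d2.
    - move=> d1 d2 ne nn e.
      have r1 : (d1 == c3) = false by apply/eqP => E; move: nn; rewrite E c3N eqxx.
      have r2 : (d2 == c3) = false by apply/eqP => E; move: nn; rewrite e E c3N eqxx.
      apply: (cv (inl (inr d1)) (inl (inr d2))) => /=; rewrite ?r1 ?r2 ?e //.
      by rewrite -e; case: (mvtx T d1) nn.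
  have ob1 : phi (inl (inl o1)) = phi (inl (inr b1)).
    by have := cg (inl (inl o1)); rewrite /= eqxx.
  have ob2 : phi (inl (inl o2)) = phi (inl (inr b2)).
    by have := cg (inl (inl o2)); rewrite /= o12 eqxx.
  have [pb _] := prT _ cT.
  have oo : phi (inl (inl o1)) != phi (inl (inl o2)) by rewrite ob1 ob2 -add_eq0.
  have ii : phi (inl (inl i1)) = phi (inl (inl i2)).
    by case: (eqVneq (phi (inl (inl i1))) (phi (inl (inl i2)))) => // ne; exfalso; apply: (neg_key _ _ _ _ _ _ _ p221 mN negN cN ne oo).
  split => //.
  have pN := par221 _ _ _ _ _ _ _ mN p221 cN.
  have pT := par23 _ _ _ _ _ _ _ mT p23 cT.
  simpl in pN, pT.
  have vtt : forall d, d \in [:: inl (inl r); inl (inr c3); inr false] -> NT_vtx N T r c3 d = Some (inr tt).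
    by move=> d; rewrite !inE => /or3P [] /eqP -> /=; rewrite ?eqxx.
  have dv : forall d1 d2, d1 \in [:: inl (inl r); inl (inr c3); inr false] -> d2 \in [:: inl (inl r); inl (inr c3); inr false] -> d1 != d2 -> phi d1 != phi d2.
    move=> d1 d2 h1 h2 ne; apply: cv => //=; rewrite ?vtt //.
  have pv : phi (inl (inl r)) + phi (inl (inr c3)) + phi (inr false) = 0.
    by apply: sum3; rewrite ?cK // dv // !inE eqxx ?orbT.
  have et : phi (inr true) = phi (inr false) by apply: (cm (inr false)).
  rewrite et; rewrite ii addxx add0r ob1 ob2 in pN.
  have rv : phi (inl (inr b1)) + phi (inl (inr b2)) = phi (inl (inl r)) by apply: ch2; rewrite pN.
  rewrite -!(addrA (phi (inl (inr b1)) + phi (inl (inr b2)))) rv in pT.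
  have ev : phi (inl (inl r)) + phi (inl (inr c3)) = phi (inr false) by apply: ch2.
  rewrite -ev; move: pT; set R := phi (inl (inl r)); set C3 := phi (inl (inr c3)).
  set X1 := phi (inl (inr c1)); set X2 := phi (inl (inr c2)) => pT.
  by rewrite -pT [in RHS]addrC -!addrA [R + C3]addrC.
move=> [_ pnN] [_ ptT] x a b c hx ha hb hc abc.
have /andP [hy yc] := pickK_b c; set y := pickK c in hy yc *.
have hs : inK (y + c) by apply: add_inK.
have [phiT [cT [t1 t2 t3 t4 t5]]] : exists phiT, colouring T phiT /\
    [/\ phiT b1 = y, phiT b2 = c, phiT c1 = a, phiT c2 = b & phiT c3 = y].
  apply (ptT y c a b y).2; split; first by rewrite hy hc ha hb.
  split; last by rewrite add_eq0.
  by rewrite (ch2 _ _ abc) addrC.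
have [phiN [cN [n1 n2 n3 n4 n5]]] : exists phiN, colouring N phiN /\
    [/\ phiN i1 = x, phiN i2 = x, phiN o1 = y, phiN o2 = c & phiN r = y + c].
  apply (pnN x x y c (y + c)).2; left; by exists x, y, c.
case: (cN) => nK [nm [ng nv]]; case: (cT) => tK [tm [tg tv]].
exists (fun d : mD M => match d with inl (inl d) => phiN d | inl (inr d) => phiT d | inr _ => c end).
split => //; split; [|split; [|split]].
- by case => [[d|d]|_].
- by case => [[d|d]|_] //=; rewrite ?nm ?tm.
- case => [[d|d]|bb] //=.
  + case: eqP => [->|_]; first by rewrite t1 n3.
    case: eqP => [->|_]; first by rewrite t2 n4.
    exact: ng.
  + case: eqP => [->|_]; first by rewrite t1 n3.
    case: eqP => [->|_]; first by rewrite t2 n4.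
    exact: tg.
move=> d1 d2 ne; case E1: (mvtx M d1) => [z|] // _ E2.
have S1 := NT_vtx_spec _ _ _ _ _ _ E1; have S2 := NT_vtx_spec _ _ _ _ _ _ (esym E2).
case: z S1 S2 E1 E2 ne => [[z|z]|[]].
- move=> [a1 [-> h1]] [a2 [-> h2]] _ _ ne /=; apply: nv; rewrite ?h1 ?h2 //.
- move=> [a1 [-> h1]] [a2 [-> h2]] _ _ ne /=; apply: tv; rewrite ?h1 ?h2 //.
have yr : y + c != y by apply: addK_neq.
have cr : y + c != c by apply: addK_neq'.
move=> [->|[->|->]] [->|[->|->]] _ _ //=; rewrite ?t5 ?n5 // ?eqxx // => _; by rewrite // eq_sym.
Qed.
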